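(* For every integer $n\geq 4$ and every edge $e$ of $G_n$, the graph $G_n - e$ is $(n-3)$-colourable.
   Context: Let $[n]=\{1,\dots,n\}$. A $2$-subset $\{a,b\}$ of $[n]$ with $a<b$ is called stable if $b \neq a+1$ and $\{a,b\}\neq\{1,n\}$; it is written $ab$. For $n\ge 4$, the graph $G_n$ has as vertex set all stable $2$-subsets of $[n]$; two vertices $ab$ ($a<b$) and $cd$ ($c<d$) with $a<c$ are adjacent iff $\{a,b\}\cap\{c,d\}=\emptyset$ and either $a<c<b<d$, or $1<a<c<d<b$. *)

(* Defs.v *)
From mathcomp Require Import all_boot.
Set Implicit Arguments. Unset Strict Implicit. Unset Printing Implicit Defensive.

(* A vertex ab (a<b) of G_n is encoded as the pair (a, b) of naturals. *)

Definition stable (n : nat) (v : nat * nat) : bool :=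
  let: (a, b) := v in
  [&& 1 <= a, a < b, b <= n, b != a.+1 & ~~ ((a == 1) && (b == n))].

Definition adj_oriented (u v : nat * nat) : bool :=
  let: (a, b) := u in let: (c, d) := v in
  [&& a < c,
      [&& a != c, a != d, b != c & b != d] &
      (a < c) && (c < b) && (b < d) || (1 < a) && (a < c) && (c < d) && (d < b)].

Definition Gn_edge (n : nat) (u v : nat * nat) : bool :=
  [&& stable n u, stable n v & adj_oriented u v || adj_oriented v u].

Definition Gn_minus_edge_colourable (n : nat) (e1 e2 : nat * nat) (k : nat) : Prop :=
  exists f : nat * nat -> 'I_k,
    forall u v, Gn_edge n u v ->
      ~~ (((u == e1) && (v == e2)) || ((u == e2) && (v == e1))) ->
      f u != f v.

(* Main.v *)
Require Import Defs.
From mathcomp Require Import all_boot.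
From mathcomp Require Import zify.
Set Implicit Arguments. Unset Strict Implicit.

Definition sh (k i : nat) := if i < k then i else i.-1.
Definition shp (k : nat) (u : nat * nat) := (sh k u.1, sh k u.2).
Definition sk (n k : nat) : nat * nat := if k == n then (1, n.-1) else (k.-1, k.+1).
Definition hasp (k : nat) (u : nat * nat) := (u.1 == k) || (u.2 == k).

Lemma edge_disj n k u v : Gn_edge n u v -> hasp k u -> hasp k v -> False.
Proof.
case: u => a b; case: v => c d; rewrite /Gn_edge /stable /adj_oriented /hasp /=.
lia.
Qed.

Lemma edge_irr n u : Gn_edge n u u -> False.
Proof.
case: u => a b; rewrite /Gn_edge /stable /adj_oriented /=; lia.
Qed.

Lemma edge_sym n u v : Gn_edge n u v -> Gn_edge n v u.
Proof.
by rewrite /Gn_edge => /and3P [-> -> H] /=; rewrite orbC.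
Qed.

Lemma sh_lt k x y : x != k -> y != k -> (sh k x < sh k y) = (x < y).
Proof. rewrite /sh => hx hy; case: (ltnP x k); case: (ltnP y k); lia. Qed.

Lemma sh_eq k x y : x != k -> y != k -> (sh k x == sh k y) = (x == y).
Proof. rewrite /sh => hx hy; case: (ltnP x k); case: (ltnP y k); lia. Qed.

Lemma sh_gt1 k x : 2 <= k -> x != k -> (1 < sh k x) = (1 < x).
Proof. rewrite /sh => hk hx; case: (ltnP x k); lia. Qed.

Lemma stable_sh n k a b : 2 <= k <= n -> stable n (a, b) -> a != k -> b != k ->
  (a, b) != sk n k -> stable n.-1 (sh k a, sh k b).
Proof.
rewrite /stable /sk /sh => Hk Hs ha hb; case: (k =P n) => Hkn; rewrite xpair_eqE;
case: (ltnP a k); case: (ltnP b k); lia.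
Qed.

Lemma ao_sh k a b c d : 2 <= k -> a != k -> b != k -> c != k -> d != k ->
  adj_oriented (a, b) (c, d) -> adj_oriented (sh k a, sh k b) (sh k c, sh k d).
Proof.
move=> Hk ha hb hc hd; rewrite /adj_oriented.
by rewrite !sh_lt // !sh_eq // sh_gt1.
Qed.

Lemma transfer n k u v : 2 <= k <= n -> Gn_edge n u v -> ~~ hasp k u -> ~~ hasp k v ->
  u != sk n k -> v != sk n k -> Gn_edge n.-1 (shp k u) (shp k v).
Proof.
case: u => a b; case: v => c d => Hk /and3P [s1 s2 hao] hu hv n1 n2.
move: hu hv; rewrite /hasp /= !negb_or => /andP[ha hb] /andP[hc hd].
apply/and3P; split; [exact: stable_sh | exact: stable_sh | ].
have Hk2 : 2 <= k by case/andP: Hk.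
case/orP: hao => h; apply/orP; [left | right]; exact: ao_sh.
Qed.

Lemma sk_nb n k v : 2 <= k <= n -> Gn_edge n (sk n k) v -> ~~ hasp k v ->
  (4 <= k <= n - 2) && Gn_edge n (1, k.+1) v.
Proof.
case: v => c d; rewrite /sk => Hk; case: (k =P n) => Hkn;
rewrite /Gn_edge /stable /adj_oriented /hasp /=; lia.
Qed.

Lemma shp_inj k u w : ~~ hasp k u -> ~~ hasp k w -> (shp k u == shp k w) = (u == w).
Proof.
case: u => a b; case: w => c d; rewrite /hasp /shp /= !negb_or => /andP[ha hb] /andP[hc hd].
by rewrite !xpair_eqE !sh_eq.
Qed.

Lemma step m k e1 e2 : 4 <= m -> 2 <= k <= m.+1 -> ~~ hasp k e1 -> ~~ hasp k e2 ->
  sk m.+1 k != e1 -> sk m.+1 k != e2 ->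
  (4 <= k <= m.+1 - 2) ==> ((1, k.+1) != e1) && ((1, k.+1) != e2) ->
  Gn_minus_edge_colourable m (shp k e1) (shp k e2) (m - 3) ->
  Gn_minus_edge_colourable m.+1 e1 e2 (m.+1 - 3).
Proof.
move=> Hm Hk H1 H2 H3 H4 H5 [g Hg].
pose t := (1, k.+1).
have tn0 : 3 < k -> t != sk m.+1 k.
  by move=> H; rewrite /t /sk; case: (k =P m.+1) => Hkm; rewrite xpair_eqE; lia.
have ht : ~~ hasp k t by rewrite /hasp /t /=; lia.
pose F x := if hasp k x then m - 3
  else if x == sk m.+1 k then (if 4 <= k <= m.+1 - 2 then val (g (shp k t)) else 0)
  else val (g (shp k x)).
have HF' : forall x, ~~ hasp k x -> F x < m - 3.
  move=> x hx; rewrite /F (negbTE hx); case: ifP => _; [case: ifP => _ |].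
  - exact: ltn_ord.
  - lia.
  - exact: ltn_ord.
have HF : forall x, F x < m.+1 - 3.
  move=> x; case hx: (hasp k x); first by rewrite /F hx; lia.
  have := HF' x (negbT hx); lia.
have key : forall x y, Gn_edge m.+1 x y -> ~~ hasp k x -> ~~ hasp k y ->
    x != sk m.+1 k -> y != sk m.+1 k ->
    ~~ (((x == e1) && (y == e2)) || ((x == e2) && (y == e1))) ->
    g (shp k x) != g (shp k y).
  move=> x y Hxy hx hy nx ny Hn; apply: Hg.
  have HH := (transfer Hk Hxy hx hy nx ny). exact: HH.
  by rewrite !shp_inj.
exists (fun x => Ordinal (HF x)) => u v Huv Hne.
apply/eqP => /(congr1 val) /= Heq.
case hu: (hasp k u); case hv: (hasp k v).
- exact: edge_disj Huv hu hv.
- by have := HF' v (negbT hv); rewrite -Heq /F hu /= ltnn.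
- by have := HF' u (negbT hu); rewrite Heq /F hv /= ltnn.
- move/negbT: hu => hu; move/negbT: hv => hv.
  case: (eqVneq u (sk m.+1 k)) => Eu; case: (eqVneq v (sk m.+1 k)) => Ev.
  + by subst; apply: (edge_irr Huv).
  + have /andP [Hk4 Ht] : (4 <= k <= m.+1 - 2) && Gn_edge m.+1 t v.
      by apply: sk_nb => //; rewrite -Eu.
    have Fu : F u = val (g (shp k t)) by rewrite /F (negbTE hu) Eu eqxx Hk4.
    have Fv : F v = val (g (shp k v)) by rewrite /F (negbTE hv) (negbTE Ev).
    have tn := tn0 (proj1 (andP Hk4)).
    move: H5; rewrite Hk4 /= => /andP [t1 t2].
    have := key t v Ht ht hv tn Ev; rewrite (negbTE t1) (negbTE t2) /= => /(_ isT).
    by rewrite -val_eqE /= -Fu -Fv Heq eqxx.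
  + have /andP [Hk4 Ht] : (4 <= k <= m.+1 - 2) && Gn_edge m.+1 t u.
      by apply: sk_nb => //; rewrite -Ev; apply: edge_sym.
    have Fv : F v = val (g (shp k t)) by rewrite /F (negbTE hv) Ev eqxx Hk4.
    have Fu : F u = val (g (shp k u)) by rewrite /F (negbTE hu) (negbTE Eu).
    have tn := tn0 (proj1 (andP Hk4)).
    move: H5; rewrite Hk4 /= => /andP [t1 t2].
    have := key t u Ht ht hu tn Eu; rewrite (negbTE t1) (negbTE t2) /= => /(_ isT).
    by rewrite -val_eqE /= -Fu -Fv Heq eqxx.
  + have Fu : F u = val (g (shp k u)) by rewrite /F (negbTE hu) (negbTE Eu).
    have Fv : F v = val (g (shp k v)) by rewrite /F (negbTE hv) (negbTE Ev).
    have := key u v Huv hu hv Eu Ev Hne.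
    by rewrite -val_eqE /= -Fu -Fv Heq eqxx.
Qed.

Definition prs n := [seq (a, b) | a <- iota 0 n.+1, b <- iota 0 n.+1].

Lemma mem_prs n u : stable n u -> u \in prs n.
Proof.
case: u => a b; rewrite /stable => H; apply/allpairsP; exists (a, b); rewrite !mem_iota /=; split => //; lia.
Qed.

Lemma fin_check n (P : nat * nat -> nat * nat -> bool) :
  all (fun u => all (fun v => Gn_edge n u v ==> P u v) (prs n)) (prs n) ->
  forall u v, Gn_edge n u v -> P u v.
Proof.
move=> /allP H u v Huv; move: (Huv); rewrite /Gn_edge => /and3P [su sv _].
by have := allP (H u (mem_prs su)) v (mem_prs sv); rewrite Huv.
Qed.

Lemma fin_check2 n (Q R : nat * nat -> nat * nat -> bool) :
  all (fun u => all (fun v => Gn_edge n u v ==> (Q u v ==> R u v)) (prs n)) (prs n) ->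
  forall u v, Gn_edge n u v -> Q u v -> R u v.
Proof. by move=> H u v Huv; apply/implyP; apply: (fin_check H). Qed.

Lemma fin_check3 n e1 e2 k (f : nat * nat -> 'I_k) :
  all (fun u => all (fun v => Gn_edge n u v ==>
    (~~ (((u == e1) && (v == e2)) || ((u == e2) && (v == e1))) ==> (f u != f v))) (prs n)) (prs n) ->
  forall u v, Gn_edge n u v ->
    ~~ (((u == e1) && (v == e2)) || ((u == e2) && (v == e1))) -> f u != f v.
Proof. by move=> H u v Huv; apply/implyP; apply: (fin_check H). Qed.

Definition goodb n (e1 e2 : nat * nat) k :=
  [&& 2 <= k, k <= n, ~~ hasp k e1, ~~ hasp k e2, sk n k != e1, sk n k != e2 &
    (4 <= k <= n - 2) ==> ((1, k.+1) != e1) && ((1, k.+1) != e2)].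

Definition special n (e1 e2 : nat * nat) :=
  ((n == 5) && (((e1, e2) == ((2, 4), (3, 5))) || ((e1, e2) == ((3, 5), (2, 4))))) ||
  ((n == 6) && (((e1, e2) == ((2, 6), (3, 5))) || ((e1, e2) == ((3, 5), (2, 6))))).

Lemma small_good n e1 e2 : 5 <= n <= 10 -> Gn_edge n e1 e2 ->
  special n e1 e2 || has (goodb n e1 e2) (iota 2 n.-1).
Proof.
move=> Hn; move: e1 e2; apply: fin_check.
have H : all (fun n => all (fun u => all (fun v => Gn_edge n u v ==>
   (special n u v || has (goodb n u v) (iota 2 n.-1))) (prs n)) (prs n)) (iota 5 6).
  by vm_compute.
have Hn' : n \in iota 5 6 by rewrite mem_iota; lia.
exact: (allP H n Hn').
Qed.

Lemma large_good n a b c d : 11 <= n -> exists k, goodb n (a, b) (c, d) k.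
Proof.
move=> Hn; set t := [:: a; a.+1; b; c; c.+1; d; n; b.-1; d.-1].
have : ~~ all (fun k => k \in t) (iota 2 n.-1).
  apply/negP => /allP Hall; have := uniq_leq_size (iota_uniq 2 n.-1) Hall.
  rewrite size_iota /=; lia.
case/allPn => k; rewrite mem_iota => Hk Hkt; exists k.
move: Hkt; rewrite /goodb /t /hasp /sk !inE /=.
case: (k =P n) => Hkn; rewrite ?xpair_eqE; lia.
Qed.

Definition col5 (x : nat * nat) := if 2 <= x.1 then 1 else 0.
Definition col6 (x : nat * nat) :=
  if x.1 == 1 then (if x.2 <= 4 then 0 else 1)
  else if x.1 == 2 then (if x.2 <= 5 then 1 else 2)
  else if x.1 == 3 then 2 else 0.

Definition o2 (i : nat) : 'I_2 :=
  match i with 0 => @Ordinal 2 0 isT | _ => @Ordinal 2 1 isT end.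
Definition o3 (i : nat) : 'I_3 :=
  match i with 0 => @Ordinal 3 0 isT | 1 => @Ordinal 3 1 isT | _ => @Ordinal 3 2 isT end.

Lemma sp_col n e1 e2 : special n e1 e2 -> Gn_minus_edge_colourable n e1 e2 (n - 3).
Proof.
case/orP => /andP [/eqP -> H]; case/orP: H => /eqP [-> ->].
- exists (fun x => o2 (col5 x)).
  by apply: fin_check3; vm_compute.
- exists (fun x => o2 (col5 x)).
  by apply: fin_check3; vm_compute.
- exists (fun x => o3 (col6 x)).
  by apply: fin_check3; vm_compute.
- exists (fun x => o3 (col6 x)).
  by apply: fin_check3; vm_compute.
Qed.

Unset Implicit Arguments.

Theorem lemma4 (n : nat) (e1 e2 : nat * nat) :
  4 <= n -> Gn_edge n e1 e2 -> Gn_minus_edge_colourable n e1 e2 (n - 3).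
Proof.
elim: n e1 e2 => [|m IH] e1 e2 Hn He; first by [].
case: (ltnP m 4) => Hm.
  have Em : m = 3 by lia.
  subst m.
  exists (fun _ => (ord0 : 'I_1)) => u v Huv Hne.
  have F4 : forall u v, Gn_edge 4 u v ->
      ((u == (1,3)) && (v == (2,4))) || ((u == (2,4)) && (v == (1,3))).
    by apply: fin_check; vm_compute.
  move: Hne; have := F4 _ _ He; have := F4 _ _ Huv.
  by case/orP => /andP[/eqP-> /eqP->]; case/orP => /andP[/eqP-> /eqP->].
case Hs: (special m.+1 e1 e2); first exact: sp_col.
have [k Hk] : exists k, goodb m.+1 e1 e2 k.
  case: (ltnP m.+1 11) => Hn11.
    have := @small_good m.+1 e1 e2 ltac:(lia) He; rewrite Hs /= => /hasP [k _ Hk].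
    by exists k.
  case: e1 e2 He {Hs IH} => a b [c d] He; exact: large_good.
move: Hk; rewrite /goodb => /and5P [k2 kn h1 h2 /andP [h3 /andP [h4 h5]]].
have Hk : 2 <= k <= m.+1 by rewrite k2 kn.
apply: (@step m k e1 e2) => //.
apply: IH; first exact: Hm.
rewrite eq_sym in h3; rewrite eq_sym in h4.
exact: (transfer Hk He h1 h2 h3 h4).
Qed.
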